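(* Let $(X,G)$ be a minimal continuous action and $m\in\mathbb{N}$, $m\geq 2$. If $(x_1,\dots,x_m)\in Q_m(X,G)$ and $U_1\times\cdots\times U_m$ is an open product neighborhood of $(x_1,\dots,x_m)$ in $X^m$, then $$\bigcap_{i=1}^m N(U_1,U_i)\neq\emptyset.$$
   Context: $G$ is a locally compact topological group acting continuously on a compact metric space $(X,d)$; minimal means every orbit is dense. A tuple $(x_1,\dots,x_m)\in X^m$ is $m$-regionally proximal if for each $\varepsilon>0$ there exist $x_1',\dots,x_m'\in X$ with $d(x_i,x_i')<\varepsilon$ for all $i$, and $g\in G$ with $d(gx_i',gx_j')<\varepsilon$ for all $i,j$; $Q_m(X,G)$ is the set of such tuples. For nonempty open $U,V\subset X$, $N(U,V)=\{g\in G: U\cap gV\neq\emptyset\}$. *)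

(* Defs.v *)
From HB Require Import structures.
From mathcomp Require Import all_boot all_order all_algebra.
From mathcomp Require Import all_classical all_reals all_analysis.
Set Implicit Arguments. Unset Strict Implicit. Unset Printing Implicit Defensive.
Import Order.TTheory GRing.Theory Num.Theory.
Local Open Scope classical_set_scope.
Local Open Scope ring_scope.

Definition lc_topological_group (G : topologicalType)
    (mul : G -> G -> G) (inv : G -> G) (e : G) : Prop :=
  (forall a b c, mul a (mul b c) = mul (mul a b) c) /\
  (forall a, mul e a = a /\ mul a e = a) /\
  (forall a, mul (inv a) a = e /\ mul a (inv a) = e) /\
  continuous (fun p : G * G => mul p.1 p.2) /\
  continuous inv /\
  (forall g : G, exists V : set G, nbhs g V /\ compact V).

Definition continuous_action (G X : topologicalType)
    (mul : G -> G -> G) (e : G) (act : G -> X -> X) : Prop :=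
  [/\ (forall x, act e x = x),
      (forall g h x, act (mul g h) x = act g (act h x)) &
      continuous (fun p : G * X => act p.1 p.2)].

Definition orbit (G X : Type) (act : G -> X -> X) (x : X) : set X :=
  [set act g x | g in [set: G]].

Definition minimal (G : Type) (X : topologicalType) (act : G -> X -> X) :=
  forall x : X, closure (orbit act x) = [set: X].

Definition Qm (R : realType) (G : Type) (X : metricType R)
    (act : G -> X -> X) (m : nat) : set ('I_m -> X) :=
  [set x | forall eps : R, 0 < eps ->
     exists x' : 'I_m -> X,
       (forall i, mdist (x i) (x' i) < eps) /\
       exists g : G, forall i j, mdist (act g (x' i)) (act g (x' j)) < eps].

Definition Nret (G X : Type) (act : G -> X -> X) (U V : set X) : set G :=
  [set g | U `&` (act g @` V) !=set0].

(* Main.v *)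
Require Import Defs.
From HB Require Import structures.
From mathcomp Require Import all_boot all_order all_algebra.
From mathcomp Require Import all_classical all_reals all_analysis.
From mathcomp Require Import lra.
Import Order.TTheory GRing.Theory Num.Theory.
Local Open Scope classical_set_scope.
Local Open Scope ring_scope.

Theorem lemma5p4 (R : realType) (G : topologicalType) (X : metricType R)
    (mul : G -> G -> G) (inv : G -> G) (e : G) (act : G -> X -> X)
    (hG : lc_topological_group mul inv e)
    (hX : compact [set: X])
    (hact : continuous_action mul e act)
    (hmin : minimal act)
    (m : nat) (hm : (2 <= m)%N)
    (x : 'I_m -> X) (hx : Qm act x)
    (U : 'I_m -> set X) (hUo : forall i, open (U i)) (hxU : forall i, U i (x i))
    (i1 : 'I_m) (hi1 : nat_of_ord i1 = 0%N) :
  \bigcap_(i in [set: 'I_m]) Nret act (U i1) (U i) !=set0.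
Proof.
case: hact => _ hmul hcont.
have cs : forall s, continuous (act s).
  move=> s z.
  apply: (@continuous_comp _ _ _ (fun z => (s, z)) (fun p : G * X => act p.1 p.2)).
    by apply: cvg_pair; [exact: cvg_cst | exact: cvg_id].
  exact: hcont.
have nU : forall i, \forall d \near (0:R)^'+, ball (x i) d `<=` U i.
  move=> i.
  have : nbhs (x i) (U i) by apply: open_nbhs_nbhs; split; [exact: hUo|exact: hxU].
  move/nbhs_ballP => [r r0 hr].
  apply: filterS (nbhs_right_lt r0) => d dr.
  exact: subset_trans (le_ball (ltW dr)) hr.
have [r r0 hr] : exists2 r : R, 0 < r & ball (x i1) r `<=` U i1.
  have : nbhs (x i1) (U i1) by apply: open_nbhs_nbhs; split; [exact: hUo|exact: hxU].
  by move/nbhs_ballP => [r r0 hr]; exists r.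
have leb : \forall d \near (0:R)^'+, [set: X] `<=`
   (fun y => exists s, forall z, ball y d z -> ball (x i1) r (act s z)).
  apply: (proj1 (compact_near_coveringP _) hX R (0:R)^'+
    (fun d y => exists s, forall z, ball y d z -> ball (x i1) r (act s z))).
  move=> y _.
  have hc := hmin y.
  have : closure (Defs.orbit act y) (x i1) by rewrite hc.
  move=> /(_ (ball (x i1) r) (nbhsx_ballx _ _ r0)) [a [[s _ <-] hsa]].
  have : nbhs (act s y) (ball (x i1) r).
    apply/nbhs_ballP; exists ((r - mdist (x i1) (act s y)) / 2).
      by rewrite /= divr_gt0 // subr_gt0; move: hsa; rewrite ballEmdist.
    move=> p hp; have hsa' := hsa; rewrite ballEmdist /= in hsa'.
    have : ball (x i1) (r - (r - mdist (x i1) (act s y)) / 2) (act s y).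
      rewrite ballEmdist /=.
      have h2 : 0 < r - mdist (x i1) (act s y) by rewrite subr_gt0.
      lra.
    move=> /ball_triangle /(_ hp).
    by rewrite subrK.
  move=> /(cs s y) /nbhs_ballP [dl dl0 hdl].
  exists (ball y (dl / 2), [set d : R | d < dl / 2]).
    split => /=; [apply: nbhsx_ballx; rewrite divr_gt0 // | apply: nbhs_right_lt; rewrite divr_gt0 //].
  case=> y' d /= [hy' hd]; exists s => z hz; apply: hdl.
  rewrite /= in hy' *.
  have := ball_triangle hy' hz.
  apply: le_ball; lra.
have nUa : \forall d \near (0:R)^'+, forall i, ball (x i) d `<=` U i.
  exact: filter_forall.
set Lb := (fun d : R => [set: X] `<=`
   (fun y => exists s, forall z, ball y d z -> ball (x i1) r (act s z))) in leb.
have [d [[hleb hnU] d0]] : exists d : R, (Lb d /\ (forall i, ball (x i) d `<=` U i)) /\ 0 < d.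
  apply: (@filter_ex _ ((0:R)^'+)).
  apply: filterI; [apply: filterI; [exact: leb|exact: nUa]|exact: nbhs_right_gt].
have [x' [hx'1 [g hg]]] := hx d d0.
have [s hs] := hleb (act g (x' i1)) I.
exists (mul s g) => i _.
exists (act (mul s g) (x' i)); split; last first.
  exists (x' i) => //; apply: hnU; rewrite ballEmdist; exact: hx'1.
apply: hr; rewrite hmul; apply: hs; rewrite ballEmdist; exact: hg.
Qed.
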